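(* Let $f:\mathbb{R}^d\to\mathbb{R}^d$ be a linear isomorphism having real eigenvalues $\lambda$ and $\mu$ with $\lambda>1$ and $0<\mu<1$. Then $f$ does not satisfy the topological shadowing property.
   Context: Let $(X,d)$ be a metric space and $f:X\to X$ a homeomorphism; $\mathcal{C}^+=\{\epsilon:X\to\mathbb{R}^+ : \epsilon \text{ continuous}\}$. For $\delta\in\mathcal{C}^+$, a sequence $\{x_n\}_{n\in\mathbb{Z}}\subset X$ is a $\delta$-pseudo-orbit of $f$ if $d(f(x_n),x_{n+1})<\delta(f(x_n))$ for every $n\in\mathbb{Z}$. For $\epsilon\in\mathcal{C}^+$, the sequence $\{x_n\}$ is $\epsilon$-shadowed by an orbit if there is $y\in X$ with $d(f^n(y),x_n)<\epsilon(x_n)$ for every $n\in\mathbb{Z}$. The homeomorphism $f$ satisfies the topological shadowing property if for every $\epsilon\in\mathcal{C}^+$ there exists $\delta\in\mathcal{C}^+$ such that every $\delta$-pseudo-orbit is $\epsilon$-shadowed by an orbit. $\mathbb{R}^d$ carries the Euclidean metric. *)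

(* Defs.v *)
From mathcomp Require Import ssreflect ssrfun ssrbool eqtype ssrnat seq fintype bigop.
From Stdlib Require Import Reals ZArith.
Open Scope R_scope.

Definition metric_continuous {X : Type} (dist : X -> X -> R) (e : X -> R) : Prop :=
  forall x (eps : R), 0 < eps ->
    exists delta, 0 < delta /\ forall y, dist x y < delta -> Rabs (e y - e x) < eps.

Definition Cplus {X : Type} (dist : X -> X -> R) (e : X -> R) : Prop :=
  (forall x, 0 < e x) /\ metric_continuous dist e.

Definition pseudo_orbit {X : Type} (dist : X -> X -> R) (f : X -> X)
  (delta : X -> R) (x : Z -> X) : Prop :=
  forall n : Z, dist (f (x n)) (x (n + 1)%Z) < delta (f (x n)).

Definition orbit_of {X : Type} (f : X -> X) (y : X) (o : Z -> X) : Prop :=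
  o 0%Z = y /\ forall n : Z, o (n + 1)%Z = f (o n).

Definition eps_shadowed {X : Type} (dist : X -> X -> R) (f : X -> X)
  (eps : X -> R) (x : Z -> X) : Prop :=
  exists (y : X) (o : Z -> X), orbit_of f y o /\
    forall n : Z, dist (o n) (x n) < eps (x n).

Definition topological_shadowing {X : Type} (dist : X -> X -> R) (f : X -> X) : Prop :=
  forall eps, Cplus dist eps ->
    exists delta, Cplus dist delta /\
      forall x : Z -> X, pseudo_orbit dist f delta x -> eps_shadowed dist f eps x.

Definition Rd (d : nat) : Type := 'I_d -> R.

Definition euclid_dist {d : nat} (x y : Rd d) : R :=
  sqrt (\big[Rplus/0]_(i < d) (x i - y i) ^ 2).

Definition vadd {d : nat} (x y : Rd d) : Rd d := fun i => x i + y i.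
Definition vscale {d : nat} (a : R) (x : Rd d) : Rd d := fun i => a * x i.
Definition vzero {d : nat} : Rd d := fun _ => 0.

Definition linear_map {d : nat} (f : Rd d -> Rd d) : Prop :=
  (forall x y, f (vadd x y) = vadd (f x) (f y)) /\
  (forall a x, f (vscale a x) = vscale a (f x)).

Definition linear_iso {d : nat} (f : Rd d -> Rd d) : Prop :=
  linear_map f /\ exists g : Rd d -> Rd d, (forall x, g (f x) = x) /\ (forall y, f (g y) = y).

Definition real_eigenvalue {d : nat} (f : Rd d -> Rd d) (lam : R) : Prop :=
  exists v : Rd d, v <> vzero /\ f v = vscale lam v.

(* Main.v *)
From HB Require Import structures.
Require Import Defs.
From mathcomp Require Import ssreflect ssrfun ssrbool eqtype ssrnat seq fintype bigop.
From Stdlib Require Import Reals ZArith Lra Lia Classical FunctionalExtensionality.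
Open Scope R_scope.

Lemma Rplus_assoc_ssr : associative Rplus. Proof. move=> *; ring. Qed.
HB.instance Definition _ := Monoid.isComLaw.Build R 0 Rplus Rplus_assoc_ssr Rplus_comm Rplus_0_l.

Section V.
Context {d : nat}.
Implicit Types x y z a b : Rd d.

Definition S x := \big[Rplus/0]_(i < d) (x i)^2.
Definition N x := sqrt (S x).
Definition dot x y := \big[Rplus/0]_(i < d) (x i * y i).
Definition vsub x y : Rd d := fun i => x i - y i.

Lemma dist_N x y : euclid_dist x y = N (vsub x y).
Proof. by []. Qed.

Lemma big_scal (F : 'I_d -> R) c : \big[Rplus/0]_(i < d) (c * F i) = c * \big[Rplus/0]_(i < d) F i.
Proof. elim/big_rec2: _ => [|i s1 s2 _ ->]; ring. Qed.

Lemma big_le (F G : 'I_d -> R) : (forall i, F i <= G i) ->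
  \big[Rplus/0]_(i < d) F i <= \big[Rplus/0]_(i < d) G i.
Proof. move=> H; elim/big_rec2: _ => [|i s1 s2 _ Hs]; [lra| have := H i; lra]. Qed.

Lemma big_ge0 (F : 'I_d -> R) : (forall i, 0 <= F i) -> 0 <= \big[Rplus/0]_(i < d) F i.
Proof. move=> H; elim/big_rec: _ => [|i s _ Hs]; [lra| have := H i; lra]. Qed.

Lemma S_ge0 x : 0 <= S x.
Proof. apply: big_ge0 => i; apply: pow2_ge_0. Qed.

Lemma N_ge0 x : 0 <= N x.
Proof. apply: sqrt_pos. Qed.

Lemma N2 x : N x ^ 2 = S x.
Proof. rewrite /N /= Rmult_1_r sqrt_sqrt //; apply: S_ge0. Qed.

Lemma coord_le x i : (x i)^2 <= S x.
Proof.
rewrite /S (bigD1 i) //.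
rewrite -{1}[x i ^ 2]Rplus_0_r; apply: Rplus_le_compat_l.
elim/big_rec: _ => [|k s _ Hs]; [lra| have := pow2_ge_0 (x k); simpl; lra].
Qed.

Lemma coord_leN x i : Rabs (x i) <= N x.
Proof.
rewrite -sqrt_Rsqr_abs /N; apply: sqrt_le_1_alt.
rewrite /Rsqr; have := coord_le x i; rewrite /= Rmult_1_r; done.
Qed.

Lemma S_comb p q x y : S (fun i => p * x i + q * y i) = p^2 * S x + 2*p*q * dot x y + q^2 * S y.
Proof.
rewrite /S /dot -!big_scal -!big_split; apply: eq_bigr => i _ /=; ring.
Qed.

Lemma dot_zero x y : (forall i, x i = 0) -> dot x y = 0.
Proof. move=> H; rewrite /dot big1 // => i _; rewrite H; ring. Qed.

Lemma S_zero x : S x = 0 -> forall i, x i = 0.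
Proof. move=> H i; have := coord_le x i; rewrite H => h.
have := pow2_ge_0 (x i); move=> h2. have : x i ^ 2 = 0 by lra. simpl; nra. Qed.

Lemma CS x y : dot x y <= N x * N y.
Proof.
have H := S_comb (N y) (- N x) x y.
have H0 := S_ge0 (fun i => N y * x i + - N x * y i).
rewrite H -!N2 in H0.
have Hx := N_ge0 x; have Hy := N_ge0 y.
case: (Req_dec (N x * N y) 0) => Hz.
- case: (Rmult_integral _ _ Hz) => Hz'.
  + rewrite dot_zero; first by lra.
    apply: S_zero; by rewrite -N2 Hz'; simpl; ring.
  + have : dot y x = 0. apply: dot_zero; apply: S_zero; by rewrite -N2 Hz'; simpl; ring.
    have -> : dot x y = dot y x by rewrite /dot; apply: eq_bigr => i _; ring.
    lra.
- have hp : 0 < N x * N y by nra.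
  nra.
Qed.

Lemma N_add x y : N (vadd x y) <= N x + N y.
Proof.
have Hx := N_ge0 x; have Hy := N_ge0 y.
have E : S (vadd x y) = S x + 2 * dot x y + S y.
  have := S_comb 1 1 x y; rewrite /= !Rmult_1_l !Rmult_1_r => <-.
  rewrite /S; apply: eq_bigr => i _; rewrite /vadd; ring.
rewrite /N -(sqrt_pow2 (N x + N y)); last lra.
apply: sqrt_le_1_alt. rewrite E -!N2. have := CS x y. nra.
Qed.

Lemma N_scale c x : N (vscale c x) = Rabs c * N x.
Proof.
have E : S (vscale c x) = c^2 * S x.
  rewrite /S -big_scal; apply: eq_bigr => i _; rewrite /vscale; ring.
rewrite /N E sqrt_mult; [|apply: pow2_ge_0|apply: S_ge0].
by rewrite -sqrt_Rsqr_abs /Rsqr /= Rmult_1_r.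
Qed.

Lemma S_scale c x : S (vscale c x) = c^2 * S x.
Proof. rewrite /S -big_scal; apply: eq_bigr => i _; rewrite /vscale; ring. Qed.

Lemma vsub_eq a b : vsub a b = vadd a (vscale (-1) b).
Proof. apply: functional_extensionality => i; rewrite /vsub /vadd /vscale; ring. Qed.

Lemma N_sub a b : N (vsub a b) <= N a + N b.
Proof. rewrite vsub_eq; apply: Rle_trans (N_add _ _) _; rewrite N_scale Rabs_Ropp Rabs_R1; lra. Qed.

Lemma N_rev a b : N b - N a <= N (vadd a b).
Proof.
have E : vadd (vadd a b) (vscale (-1) a) = b.
  apply: functional_extensionality => i; rewrite /vadd /vscale; ring.
have := N_add (vadd a b) (vscale (-1) a).
rewrite E N_scale Rabs_Ropp Rabs_R1.
lra.
Qed.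

Lemma S_vzero : S vzero = 0.
Proof. rewrite /S big1 // => i _; rewrite /vzero; ring. Qed.

Lemma N_vzero : N vzero = 0.
Proof. by rewrite /N S_vzero sqrt_0. Qed.

Lemma dist_self a : euclid_dist a a = 0.
Proof.
rewrite dist_N.
have -> : vsub a a = vzero by apply: functional_extensionality => i; rewrite /vsub /vzero; ring.
exact: N_vzero.
Qed.

Definition ebas (i : 'I_d) : Rd d := fun j => if i == j then 1 else 0.

Lemma bigv_eval (F : 'I_d -> Rd d) j :
  (\big[vadd/vzero]_(i < d) F i) j = \big[Rplus/0]_(i < d) F i j.
Proof. elim/big_rec2: _ => [|i V s _ <-] //. Qed.

Lemma decomp z : z = \big[vadd/vzero]_(i < d) vscale (z i) (ebas i).
Proof.
apply: functional_extensionality => j; rewrite bigv_eval (bigD1 j) // big1 => [|i Hij].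
  rewrite /vscale /ebas eqxx /=; ring.
rewrite /vscale /ebas (negbTE Hij); ring.
Qed.

Lemma lin_zero (h : Rd d -> Rd d) : linear_map h -> h vzero = vzero.
Proof.
move=> [_ Hs].
have -> : (vzero : Rd d) = vscale 0 vzero by apply: functional_extensionality => i; rewrite /vscale /vzero; ring.
rewrite Hs; apply: functional_extensionality => i; rewrite /vscale /vzero; ring.
Qed.

Lemma lin_big (h : Rd d -> Rd d) (F : 'I_d -> Rd d) : linear_map h ->
  h (\big[vadd/vzero]_(i < d) F i) = \big[vadd/vzero]_(i < d) h (F i).
Proof.
move=> Hl; elim/big_rec2: _ => [|i V W _ <-]; first exact: lin_zero.
by case: Hl => Ha _; rewrite Ha.
Qed.

Lemma N_big (F : 'I_d -> Rd d) : N (\big[vadd/vzero]_(i < d) F i) <= \big[Rplus/0]_(i < d) N (F i).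
Proof.
elim/big_rec2: _ => [|i V s _ Hs]; first by rewrite N_vzero; lra.
apply: Rle_trans (N_add _ _) _; lra.
Qed.

Lemma op_bound (h : Rd d -> Rd d) : linear_map h -> exists C, 0 <= C /\ forall z, N (h z) <= C * N z.
Proof.
move=> Hl; exists (\big[Rplus/0]_(i < d) N (h (ebas i))); split.
  by apply: big_ge0 => i; apply: N_ge0.
move=> z; rewrite {1}(decomp z) lin_big //.
apply: Rle_trans (N_big _) _.
rewrite Rmult_comm -big_scal; apply: big_le => i.
case: Hl => _ Hs; rewrite Hs N_scale.
apply: Rmult_le_compat_r; [apply: N_ge0 | apply: coord_leN].
Qed.

Lemma N_diff x y : Rabs (N y - N x) <= euclid_dist x y.
Proof.
rewrite dist_N.
have E1 : x = vadd (vsub x y) y by apply: functional_extensionality => i; rewrite /vadd /vsub; ring.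
have E2 : y = vadd x (vscale (-1) (vsub x y)) by apply: functional_extensionality => i; rewrite /vadd /vsub /vscale; ring.
have h1 := N_add (vsub x y) y. rewrite -E1 in h1.
have h2 := N_add x (vscale (-1) (vsub x y)). rewrite -E2 N_scale Rabs_Ropp Rabs_R1 in h2.
apply: Rabs_le; lra.
Qed.

Lemma S_cont x e0 : 0 < e0 -> exists del, 0 < del /\ forall y, euclid_dist x y < del -> Rabs (S y - S x) < e0.
Proof.
move=> He. have Hx := N_ge0 x.
exists (Rmin 1 (e0 / (2 * N x + 2))); split.
  apply: Rmin_pos; [lra| apply: Rdiv_lt_0_compat; lra].
move=> y Hy. have Hd := N_diff x y. have Hy0 := N_ge0 y.
have H1 : euclid_dist x y < 1 by apply: Rlt_le_trans Hy (Rmin_l _ _).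
have H2 : euclid_dist x y < e0 / (2 * N x + 2) by apply: Rlt_le_trans Hy (Rmin_r _ _).
have H3 : euclid_dist x y * (2 * N x + 2) < e0.
  have Hc : 0 < 2 * N x + 2 by lra.
  have E : e0 = e0 / (2 * N x + 2) * (2 * N x + 2) by field; lra.
  rewrite E; apply: Rmult_lt_compat_r => //.
rewrite -!N2.
have -> : N y ^ 2 - N x ^ 2 = (N y - N x) * (N y + N x) by ring.
rewrite Rabs_mult (Rabs_pos_eq (N y + N x)); last lra.
have Hd0 : 0 <= Rabs (N y - N x) by apply: Rabs_pos.
have : N y <= N x + 1 by have := Rle_abs (N y - N x); lra.
move: Hd; move: (Rabs (N y - N x)) Hd0 => t Ht Hd Hle.
nra.
Qed.

Lemma eps_cont P : metric_continuous (@euclid_dist d) (fun x => / (1 + S x)^P).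
Proof.
move=> x e0 He.
have Hc : continuity_pt (fun t => / (1 + t)^P) (S x).
  have := S_ge0 x => Ha. reg. apply: pow_nonzero. lra.
have [alp [Halp Hal]] := Hc e0 He.
have [del [Hdel Hd]] := S_cont x alp Halp.
exists del; split => // y Hy.
case: (Req_dec (S y) (S x)) => E.
  by rewrite E Rminus_diag Rabs_R0.
have := Hal (S y); rewrite /= /R_dist; apply; split.
  by split => //; apply: not_eq_sym.
exact: Hd.
Qed.
End V.

Lemma pow_le1 (a : R) n : 0 <= a <= 1 -> a ^ n <= 1.
Proof. move=> H; elim: n => [|n IH] /=; [lra| have := pow_le a n; nra]. Qed.

Lemma inv_bound (a b : R) P : 0 < b -> b <= a -> / (1 + a) ^ P <= / b ^ P.
Proof.
move=> Hb Hba; apply: Rinv_le_contravar; first exact: pow_lt.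
apply: pow_incr; lra.
Qed.

Lemma pow_swap (a : R) k P : ((a ^ k) ^ 2) ^ P = ((a ^ 2) ^ P) ^ k.
Proof. rewrite -!pow_mult; f_equal; lia. Qed.

Lemma lin_sub {d} (h : Rd d -> Rd d) (a b : Rd d) : linear_map h -> h (vsub a b) = vsub (h a) (h b).
Proof. move=> [Ha Hs]; by rewrite !vsub_eq Ha Hs. Qed.

Lemma nonzero_N {d} {u : Rd d} : u <> vzero -> 0 < N u.
Proof.
move=> Hu.
have [i Hi] : exists i, u i <> 0.
  apply: NNPP => H; apply: Hu; apply: functional_extensionality => i.
  apply: NNPP => H'; apply: H; by exists i.
have := coord_leN u i. have := Rabs_pos_lt _ Hi. lra.
Qed.

Theorem mainTheorem5 (d : nat) (f : Rd d -> Rd d) (lam mu : R) :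
  linear_iso f ->
  real_eigenvalue f lam -> 1 < lam ->
  real_eigenvalue f mu -> 0 < mu -> mu < 1 ->
  ~ topological_shadowing (@euclid_dist d) f.
Proof.
move=> [Hlin [g [Hgf Hfg]]] [u [Hu Hfu]] Hlam [v [Hv Hfv]] Hmu0 Hmu1 Hsh.
have Hglin : linear_map g.
  split.
  - move=> x y; rewrite -{1}(Hfg x) -{1}(Hfg y); case: Hlin => Ha _; by rewrite -Ha Hgf.
  - move=> a x; rewrite -{1}(Hfg x); case: Hlin => _ Hs; by rewrite -Hs Hgf.
have [C1 [HC1 Hf]] := op_bound f Hlin.
have [C2 [HC2 Hg]] := op_bound g Hglin.
set L := C1 + 1. set K := C2 + 1.
have HfL : forall z, N (f z) <= L * N z.
  move=> z; apply: Rle_trans (Hf z) _; have := N_ge0 z; rewrite /L; nra.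
have HgK : forall z, N (g z) <= K * N z.
  move=> z; apply: Rle_trans (Hg z) _; have := N_ge0 z; rewrite /K; nra.
have HL : 1 <= L by rewrite /L; lra.
have HK : 1 <= K by rewrite /K; lra.
have HNu := nonzero_N Hu. have HNv := nonzero_N Hv.
have HSu : 0 < S u by rewrite -N2; apply: pow_lt.
have HSv : 0 < S v by rewrite -N2; apply: pow_lt.
have Hmi : 1 < / mu by rewrite -Rinv_1; apply: Rinv_lt_contravar; lra.
have Hmi2 : Rabs ((/ mu) ^ 2) > 1 by rewrite Rabs_pos_eq; [simpl; nra| apply: pow_le; lra].
have Hl2 : Rabs (lam ^ 2) > 1 by rewrite Rabs_pos_eq; [simpl; nra| apply: pow_le; lra].
have [P1 HP1] := Pow_x_infinity _ Hmi2 (L + 1).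
have [P2 HP2] := Pow_x_infinity _ Hl2 (K + 1).
set P := Nat.max P1 P2.
set A := ((/ mu) ^ 2) ^ P. set B := (lam ^ 2) ^ P.
have HA : L < A.
  have := HP1 P ltac:(rewrite /P; lia). rewrite Rabs_pos_eq; [rewrite /A; lra|].
  apply: pow_le; apply: pow_le; apply: Rlt_le; apply: Rinv_0_lt_compat => //.
have HB : K < B.
  have := HP2 P ltac:(rewrite /P; lia). rewrite Rabs_pos_eq; [rewrite /B; lra|].
  apply: pow_le; apply: pow_le; lra.
set eps := fun x : Rd d => / (1 + S x) ^ P.
have Heps : Cplus (@euclid_dist d) eps.
  split; last exact: eps_cont.
  move=> x; apply: Rinv_0_lt_compat; apply: pow_lt; have := S_ge0 x; lra.
have [delta [[Hdel _] Hdelsh]] := Hsh eps Heps.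
have HA0 : 0 < A by lra.
have HB0 : 0 < B by lra.
set j := delta (vscale mu v) / (2 * N u).
have Hdv := Hdel (vscale mu v).
have Hj : 0 < j by rewrite /j; apply: Rdiv_lt_0_compat; lra.
set xs := fun n : Z => if (n <=? 0)%Z then vscale (powerRZ mu n) v
  else vadd (vscale (powerRZ mu n) v) (vscale (j * powerRZ lam (n - 1)) u).
have fv : forall a, f (vscale a v) = vscale (a * mu) v.
  move=> a; case: Hlin => _ Hs; rewrite Hs Hfv; apply: functional_extensionality => i; rewrite /vscale; ring.
have fu : forall a, f (vscale a u) = vscale (a * lam) u.
  move=> a; case: Hlin => _ Hs; rewrite Hs Hfu; apply: functional_extensionality => i; rewrite /vscale; ring.
have fvu : forall a b, f (vadd (vscale a v) (vscale b u)) = vadd (vscale (a * mu) v) (vscale (b * lam) u).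
  move=> a b; case: Hlin => Ha _; by rewrite Ha fv fu.
have Hex : forall n, n <> 0%Z -> xs (n + 1)%Z = f (xs n).
  move=> n Hn; rewrite /xs.
  case: (Z.le_gt_cases n (-1)) => H.
  - have -> : (n <=? 0)%Z = true by apply/Z.leb_le; lia.
    have -> : (n + 1 <=? 0)%Z = true by apply/Z.leb_le; lia.
    rewrite fv powerRZ_add; last lra.
    congr (vscale _ v); rewrite /=; ring.
  - have -> : (n <=? 0)%Z = false by apply/Z.leb_gt; lia.
    have -> : (n + 1 <=? 0)%Z = false by apply/Z.leb_gt; lia.
    rewrite fvu powerRZ_add; last lra.
    have -> : (n + 1 - 1 = (n - 1) + 1)%Z by ring.
    rewrite powerRZ_add; last lra.
    congr vadd; congr vscale; rewrite /=; ring.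
have xs0 : f (xs 0%Z) = vscale mu v.
  rewrite /xs /= fv; congr vscale; ring.
have xs1 : xs 1%Z = vadd (vscale mu v) (vscale j u).
  rewrite /xs /=; congr vadd; congr vscale; ring.
have Hpo : pseudo_orbit (@euclid_dist d) f delta xs.
  move=> n; case: (Z.eq_dec n 0) => Hn.
  - subst n; rewrite xs0 (_ : xs (0 + 1)%Z = xs 1%Z) // xs1 dist_N.
    have -> : vsub (vscale mu v) (vadd (vscale mu v) (vscale j u)) = vscale (- j) u.
      apply: functional_extensionality => i; rewrite /vsub /vadd /vscale; ring.
    rewrite N_scale Rabs_Ropp Rabs_pos_eq; last lra.
    rewrite /j; field_simplify; lra.
  - rewrite Hex // dist_self; apply: Hdel.
have [y [o [[Ho0 Hos] Hcl]]] := Hdelsh xs Hpo.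
set w := fun n => vsub (o n) (xs n).
have Hw : forall n, n <> 0%Z -> w (n + 1)%Z = f (w n).
  by move=> n Hn; rewrite /w Hos Hex // (lin_sub _ _ _ Hlin).
have Hwl : forall n, n <> 0%Z -> N (w (n + 1)%Z) <= L * N (w n).
  by move=> n Hn; rewrite (Hw n Hn); apply: HfL.
have Hwk : forall n, n <> 0%Z -> N (w n) <= K * N (w (n + 1)%Z).
  by move=> n Hn; rewrite -{1}(Hgf (w n)) -(Hw n Hn); apply: HgK.
have Hcl' : forall n, N (w n) < eps (xs n).
  by move=> n; rewrite /w -dist_N; apply: Hcl.
have Hback : forall k : nat, N (w 0%Z) <= L ^ k * N (w (- Z.of_nat k)%Z).
  elim => [|k IH]; first by rewrite /= Rmult_1_l; apply: Rle_refl.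
  apply: Rle_trans IH _.
  have E : (- Z.of_nat k = - Z.of_nat k.+1 + 1)%Z by lia.
  rewrite E.
  have := Hwl (- Z.of_nat k.+1)%Z ltac:(lia).
  have := pow_le L k ltac:(lra). rewrite /=. nra.
have Hfwd : forall k : nat, N (w 1%Z) <= K ^ k * N (w (1 + Z.of_nat k)%Z).
  elim => [|k IH]; first by rewrite /= Rmult_1_l; apply: Rle_refl.
  apply: Rle_trans IH _.
  have E : (1 + Z.of_nat k.+1 = (1 + Z.of_nat k) + 1)%Z by lia.
  rewrite E.
  have := Hwk (1 + Z.of_nat k)%Z ltac:(lia).
  have := pow_le K k ltac:(lra). rewrite /=. nra.
have HJ : j * N u <= L * N (w 0%Z) + N (w 1%Z).
  have E : vsub (f (w 0%Z)) (w 1%Z) = vscale j u.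
    rewrite /w (lin_sub _ _ _ Hlin) -Hos xs0 (_ : (0 + 1)%Z = 1%Z) // xs1.
    apply: functional_extensionality => i; rewrite /vsub /vadd /vscale; ring.
  have := N_sub (f (w 0%Z)) (w 1%Z).
  rewrite E N_scale Rabs_pos_eq; last lra.
  have := HfL (w 0%Z). lra.
have xneg : forall k : nat, xs (- Z.of_nat k)%Z = vscale ((/ mu) ^ k) v.
  move=> k; rewrite /xs.
  have -> : (- Z.of_nat k <=? 0)%Z = true by apply/Z.leb_le; lia.
  by rewrite powerRZ_neg' -pow_powerRZ pow_inv.
have xpos : forall k : nat, xs (1 + Z.of_nat k)%Z = vadd (vscale (mu ^ k.+1) v) (vscale (j * lam ^ k) u).
  move=> k; rewrite /xs.
  have -> : (1 + Z.of_nat k <=? 0)%Z = false by apply/Z.leb_gt; lia.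
  have -> : (1 + Z.of_nat k - 1 = Z.of_nat k)%Z by lia.
  have -> : (1 + Z.of_nat k)%Z = Z.of_nat k.+1 by lia.
  by rewrite -!pow_powerRZ.
have T1 : forall k : nat, L ^ k.+1 * eps (xs (- Z.of_nat k)%Z) <= L * (L / A) ^ k / S v ^ P.
  move=> k; rewrite xneg /eps S_scale.
  have hpos : 0 < ((/ mu) ^ k) ^ 2 * S v.
    apply: Rmult_lt_0_compat => //; apply: pow_lt; apply: pow_lt; apply: Rinv_0_lt_compat; lra.
  have Hi := inv_bound _ _ P hpos (Rle_refl _).
  have E : (((/ mu) ^ k) ^ 2 * S v) ^ P = A ^ k * S v ^ P by rewrite Rpow_mult_distr pow_swap.
  rewrite E in Hi.
  have E2 : L * (L / A) ^ k / S v ^ P = L ^ k.+1 * / (A ^ k * S v ^ P).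
    rewrite /Rdiv Rpow_mult_distr pow_inv /=; field; split; apply: pow_nonzero; lra.
  rewrite E2; apply: Rmult_le_compat_l; [apply: pow_le; lra| exact: Hi].
have T2 : forall k : nat, 2 * N v <= j * lam ^ k * N u ->
    K ^ k * eps (xs (1 + Z.of_nat k)%Z) <= (K / B) ^ k / ((j * N u / 2) ^ 2) ^ P.
  move=> k Hk; rewrite xpos /eps.
  have hN := N_rev (vscale (mu ^ k.+1) v) (vscale (j * lam ^ k) u).
  have hl : 0 <= lam ^ k by apply: pow_le; lra.
  have hm0 : 0 <= mu ^ k.+1 by apply: pow_le; lra.
  have hm := pow_le1 mu k.+1 ltac:(lra).
  rewrite !N_scale !Rabs_pos_eq in hN; [|lra|nra].
  have hmv : mu ^ k.+1 * N v <= N v by nra.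
  set X := vadd _ _ in hN *.
  have hX : j * lam ^ k * N u / 2 <= N X by lra.
  have hpos : 0 < (j * N u / 2) ^ 2 * (lam ^ 2) ^ k.
    apply: Rmult_lt_0_compat; apply: pow_lt; [|apply: pow_lt; lra].
    apply: Rmult_lt_0_compat; [|lra]; nra.
  have hS : (j * N u / 2) ^ 2 * (lam ^ 2) ^ k <= S X.
    rewrite -N2 -pow_mult (_ : (2 * k)%coq_nat = (k * 2)%coq_nat); last lia.
    rewrite pow_mult -Rpow_mult_distr.
    apply: pow_incr; split; [apply: Rmult_le_pos; [|apply: pow_le]; nra| lra].
  have Hi := inv_bound _ _ P hpos hS.
  have E : ((j * N u / 2) ^ 2 * (lam ^ 2) ^ k) ^ P = ((j * N u / 2) ^ 2) ^ P * B ^ k.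
    rewrite Rpow_mult_distr /B -!pow_mult; congr (_ * _); f_equal; lia.
  rewrite E in Hi.
  have E2 : (K / B) ^ k / ((j * N u / 2) ^ 2) ^ P = K ^ k * / (((j * N u / 2) ^ 2) ^ P * B ^ k).
    rewrite /Rdiv Rpow_mult_distr pow_inv; field; split; apply: pow_nonzero; [lra|].
    apply: pow_nonzero; nra.
  rewrite E2; apply: Rmult_le_compat_l; [apply: pow_le; lra| exact: Hi].
have hLA : Rabs (L / A) < 1.
  rewrite Rabs_pos_eq; last by apply: Rlt_le; apply: Rdiv_lt_0_compat; lra.
  apply: (Rmult_lt_reg_r A) => //; rewrite /Rdiv Rmult_assoc Rinv_l; lra.
have hKB : Rabs (K / B) < 1.
  rewrite Rabs_pos_eq; last by apply: Rlt_le; apply: Rdiv_lt_0_compat; lra.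
  apply: (Rmult_lt_reg_r B) => //; rewrite /Rdiv Rmult_assoc Rinv_l; lra.
have HSvP : 0 < S v ^ P by apply: pow_lt.
have hc : 0 < (j * N u / 2) ^ 2 by apply: pow_lt; nra.
have HcP : 0 < ((j * N u / 2) ^ 2) ^ P by apply: pow_lt.
have c1pos : 0 < j * N u / 2 * S v ^ P / L.
  apply: Rdiv_lt_0_compat; [|lra]; apply: Rmult_lt_0_compat => //; nra.
have c2pos : 0 < j * N u / 2 * ((j * N u / 2) ^ 2) ^ P by apply: Rmult_lt_0_compat => //; nra.
have [k1 Hk1] := pow_lt_1_zero _ hLA _ c1pos.
have [k2 Hk2] := pow_lt_1_zero _ hKB _ c2pos.
have Hl1 : Rabs lam > 1 by rewrite Rabs_pos_eq; lra.
have [k3 Hk3] := Pow_x_infinity _ Hl1 (2 * N v / (j * N u)).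
set k := Nat.max k1 (Nat.max k2 k3).
have h1 := Hk1 k ltac:(rewrite /k; lia).
have h2 := Hk2 k ltac:(rewrite /k; lia).
have h3 := Hk3 k ltac:(rewrite /k; lia).
rewrite Rabs_pos_eq in h3; last by apply: pow_le; lra.
have hjN : 0 < j * N u by nra.
have h3' : 2 * N v <= j * lam ^ k * N u.
  have E : 2 * N v = 2 * N v / (j * N u) * (j * N u) by field; lra.
  rewrite E; have := Rmult_le_compat_r (j * N u) _ _ (Rlt_le _ _ hjN) (Rge_le _ _ h3); lra.
have t1 := T1 k. have t2 := T2 k h3'.
have ha := Rle_abs ((L / A) ^ k). have hb := Rle_abs ((K / B) ^ k).
have t1' : L * (L / A) ^ k / S v ^ P < j * N u / 2.
  apply: (Rmult_lt_reg_r (S v ^ P)) => //.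
  rewrite /Rdiv Rmult_assoc Rinv_l; last lra.
  have E : j * N u / 2 * S v ^ P = L * (j * N u / 2 * S v ^ P / L) by field; lra.
  rewrite Rmult_1_r E; apply: Rmult_lt_compat_l; lra.
have t2' : (K / B) ^ k / ((j * N u / 2) ^ 2) ^ P < j * N u / 2.
  apply: (Rmult_lt_reg_r (((j * N u / 2) ^ 2) ^ P)) => //.
  rewrite /Rdiv Rmult_assoc Rinv_l; last lra.
  rewrite Rmult_1_r; lra.
have e1 := Hback k. have e2 := Hfwd k.
have c1 := Hcl' (- Z.of_nat k)%Z. have c2 := Hcl' (1 + Z.of_nat k)%Z.
have hLk : 0 < L ^ k by apply: pow_lt; lra.
have hKk : 0 < K ^ k by apply: pow_lt; lra.
have hLk1 : L ^ k.+1 = L * L ^ k by [].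
have q1 : L * N (w 0%Z) <= L ^ k.+1 * eps (xs (- Z.of_nat k)%Z).
  rewrite hLk1 Rmult_assoc; apply: Rmult_le_compat_l; [lra|].
  apply: Rle_trans e1 _; apply: Rmult_le_compat_l; lra.
have q2 : N (w 1%Z) <= K ^ k * eps (xs (1 + Z.of_nat k)%Z).
  apply: Rle_trans e2 _; apply: Rmult_le_compat_l; lra.
lra.
Qed.
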